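(* Let $x>0$ and $p\in\mathbb{R}$. (i) If $0\le p\le \frac12$, then $\hat{G}_p(x,1)\ge K(x)^{-p(1-p)}W_p(x,1)$. (ii) If $p\le 0$ or $p\ge 1$, then $\hat{G}_p(x,1)\le K(x)^{-p(1-p)}W_p(x,1)$.
   Context: For $x>0$, $x\neq1$ and $p\neq 0$: $\hat{G}_p(x,1)=\frac{p\,x^{p/2}(x-1)}{x^p-1}$, with $\hat G_p(1,1)=1$ and $\hat{G}_0(x,1)=\frac{x-1}{\log x}$ (limiting value). $K(x)=\frac{(x+1)^2}{4x}$. The Wigner--Yanase--Dyson function for $p\in\mathbb{R}\setminus\{0,1\}$, $x\ne1$ is $W_p(x,1)=\frac{p(1-p)(x-1)^2}{(x^p-1)(x^{1-p}-1)}$, with $W_p(1,1)=1$ and $W_0(x,1)=W_1(x,1)=\frac{x-1}{\log x}$ (limiting value). *)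

(* Defs.v *)
From Stdlib Require Import Reals.
Open Scope R_scope.

Definition Ghat (p x : R) : R :=
  if Req_EM_T x 1 then 1
  else if Req_EM_T p 0 then (x - 1) / ln x
  else p * Rpower x (p / 2) * (x - 1) / (Rpower x p - 1).

Definition Kfun (x : R) : R := (x + 1) ^ 2 / (4 * x).

Definition WYD (p x : R) : R :=
  if Req_EM_T x 1 then 1
  else if Req_EM_T p 0 then (x - 1) / ln x
  else if Req_EM_T p 1 then (x - 1) / ln x
  else p * (1 - p) * (x - 1) ^ 2 / ((Rpower x p - 1) * (Rpower x (1 - p) - 1)).

(* Main.v *)
Require Import Defs.
From Stdlib Require Import Reals.
Open Scope R_scope.
From Stdlib Require Import Lra.
From Coquelicot Require Import Coquelicot.
Open Scope R_scope.

Lemma mono (f df : R -> R) a b : a <= b ->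
  (forall x, a <= x <= b -> is_derive f x (df x)) ->
  (forall x, a <= x <= b -> 0 <= df x) -> f a <= f b.
Proof.
  intros Hab Hd Hp.
  destruct (Req_dec a b) as [->|Hne]; [lra|].
  destruct (MVT_gen f a b df) as [c [Hc Hc2]].
  - intros x Hx. rewrite Rmin_left in Hx by lra. rewrite Rmax_right in Hx by lra.
    apply Hd; lra.
  - intros x Hx. rewrite Rmin_left in Hx by lra. rewrite Rmax_right in Hx by lra.
    apply continuity_pt_filterlim. apply (@ex_derive_continuous R_AbsRing R_NormedModule).
    exists (df x). apply Hd; lra.
  - rewrite Rmin_left in Hc by lra. rewrite Rmax_right in Hc by lra.
    assert (0 <= df c * (b - a)) by (apply Rmult_le_pos; [apply Hp; lra | lra]).
    lra.
Qed.

Lemma ch_pos u : 0 < cosh u.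
Proof. unfold cosh. pose proof (exp_pos u). pose proof (exp_pos (-u)). lra. Qed.

Lemma ch_ge1 u : 1 <= cosh u.
Proof.
  unfold cosh. rewrite exp_Ropp. pose proof (exp_pos u) as H.
  set (y := exp u) in *.
  assert (y + / y - 2 = (y - 1)^2 / y) by (field; lra).
  assert (0 <= (y-1)^2 / y) by (apply Rle_mult_inv_pos; [apply pow2_ge_0|lra]).
  lra.
Qed.

Lemma chsh u : cosh u ^ 2 - sinh u ^ 2 = 1.
Proof. unfold cosh, sinh. rewrite exp_Ropp. pose proof (exp_pos u). field. lra. Qed.

Lemma sh_pos u : 0 < u -> 0 < sinh u.
Proof. intros. rewrite <- sinh_0. apply sinh_lt. lra. Qed.

Lemma sh_neg u : sinh (-u) = - sinh u.
Proof. unfold sinh. rewrite Ropp_involutive. lra. Qed.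
Lemma ch_neg u : cosh (-u) = cosh u.
Proof. unfold cosh. rewrite Ropp_involutive. lra. Qed.

Lemma d_sh u : is_derive sinh u (cosh u).
Proof. unfold sinh, cosh. auto_derive; auto. lra. Qed.
Lemma d_ch u : is_derive cosh u (sinh u).
Proof. unfold sinh, cosh. auto_derive; auto. lra. Qed.

Lemma F0 u : 0 <= u -> u <= sinh u.
Proof.
  intros Hu.
  assert (H := mono (fun u => sinh u - u) (fun u => cosh u - 1) 0 u Hu).
  simpl in H. rewrite sinh_0 in H.
  cut (0 - 0 <= sinh u - u); [lra|].
  apply H.
  - intros x _. unfold sinh, cosh. auto_derive; auto. lra.
  - intros x _. pose proof (ch_ge1 x). lra.
Qed.

Lemma F1 u : 0 <= u -> sinh u <= u * cosh u.
Proof.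
  intros Hu.
  assert (H := mono (fun u => u * cosh u - sinh u) (fun u => u * sinh u) 0 u Hu).
  simpl in H. rewrite sinh_0 in H.
  cut (0 * cosh 0 - 0 <= u * cosh u - sinh u); [lra|].
  apply H.
  - intros x _. unfold sinh, cosh. auto_derive; auto. lra.
  - intros x Hx. apply Rmult_le_pos; [lra|]. destruct (Req_dec x 0) as [->|]; [rewrite sinh_0; lra|].
    left; apply sh_pos; lra.
Qed.


Lemma exp_le a b : a <= b -> exp a <= exp b.
Proof. intros [H|H]; [left; apply exp_increasing; auto|subst; lra]. Qed.
Lemma ln_ge0 x : 1 <= x -> 0 <= ln x.
Proof. intros [H|H]; [left; rewrite <- ln_1; apply ln_increasing; lra|subst; rewrite ln_1; lra]. Qed.
Lemma exp_gt1 w : 0 < w -> 1 < exp w.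
Proof. intros; rewrite <- exp_0; apply exp_increasing; lra. Qed.

Definition k u := cosh u / sinh u - 1 / u.
Lemma d_k w : 0 < w -> is_derive k w (1 / w^2 - 1 / sinh w ^ 2).
Proof.
  intros Hw. pose proof (sh_pos w Hw). pose proof (exp_pos w).
  unfold k. unfold sinh, cosh in *. auto_derive.
  - repeat split; lra.
  - rewrite !exp_Ropp in *. field. split; [lra|]. split; [|lra].
    pose proof (exp_gt1 w Hw). nra.
Qed.

Lemma kmon u v : 0 < u -> u <= v -> k u <= k v.
Proof.
  intros Hu Huv.
  apply (mono k (fun w => 1 / w^2 - 1 / sinh w ^ 2) u v Huv).
  - intros x Hx. apply d_k. lra.
  - intros x Hx. pose proof (F0 x). assert (x^2 <= sinh x ^2) by nra.
    unfold Rdiv. rewrite !Rmult_1_l.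
    assert (/ sinh x ^ 2 <= / x ^ 2) by (apply Rinv_le_contravar; nra). lra.
Qed.

Lemma k_nonneg u : 0 < u -> 0 <= k u.
Proof.
  intros Hu. pose proof (sh_pos u Hu). pose proof (F1 u).
  replace (k u) with ((u * cosh u - sinh u) / (u * sinh u)) by (unfold k; field; lra).
  apply Rle_mult_inv_pos; nra.
Qed.

Lemma k_le_tanh u : 0 < u -> k u <= sinh u / cosh u.
Proof.
  intros Hu. pose proof (sh_pos u Hu). pose proof (ch_pos u). pose proof (ch_ge1 u).
  pose proof (F0 u). pose proof (chsh u).
  assert (E : sinh u / cosh u - k u = (u * (sinh u ^ 2 - cosh u ^ 2) + sinh u * cosh u) / (u * sinh u * cosh u))
    by (unfold k; field; lra).
  replace (sinh u ^ 2 - cosh u ^ 2) with (-1) in E by lra.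
  assert (0 <= (u * -1 + sinh u * cosh u) / (u * sinh u * cosh u)).
  { apply Rle_mult_inv_pos; [nra|]. apply Rmult_lt_0_compat; [|lra]. nra. }
  lra.
Qed.

Lemma G1 s : 0 <= s -> cosh s - 1 <= s * sinh s.
Proof.
  intros Hs.
  cut (0 * sinh 0 - cosh 0 <= s * sinh s - cosh s); [rewrite cosh_0; lra|].
  apply (mono (fun s => s * sinh s - cosh s) (fun s => s * cosh s) 0 s Hs).
  - intros x _. unfold sinh, cosh. auto_derive; auto. lra.
  - intros x Hx. pose proof (ch_pos x). nra.
Qed.

Definition m1 w := ln (cosh w) - w * cosh w / sinh w + 1.

Lemma B t : 0 < t -> t * cosh t / sinh t - 1 <= ln (cosh t).
Proof.
  intros Ht.
  assert (Hm : forall s, 0 < s <= t -> m1 s <= m1 t).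
  { intros s Hs. apply (mono m1 (fun w => (w * cosh w - sinh w) / (sinh w ^ 2 * cosh w)) s t); [lra| |].
    - intros w Hw. assert (0 < w) by lra. pose proof (sh_pos w H). pose proof (exp_pos w).
      pose proof (ch_pos w).
      unfold m1. unfold sinh, cosh in *. auto_derive.
      + repeat split; lra.
      + rewrite !exp_Ropp in *. field. pose proof (exp_gt1 w H). repeat split; nra.
    - intros w Hw. assert (0 < w) by lra. pose proof (sh_pos w H). pose proof (ch_pos w).
      pose proof (F1 w). apply Rle_mult_inv_pos; [nra|]. apply Rmult_lt_0_compat; nra. }
  assert (Hl : forall s, 0 < s <= t -> - (s * sinh t) <= m1 s).
  { intros s Hs. pose proof (sh_pos s (proj1 Hs)). pose proof (ch_pos s). pose proof (ch_ge1 s).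
    pose proof (F0 s). pose proof (G1 s).
    assert (sinh s <= sinh t) by (destruct (Req_dec s t) as [->|]; [lra| left; apply sinh_lt; lra]).
    assert (s * cosh s / sinh s <= cosh s).
    { apply Rmult_le_reg_r with (sinh s); [lra|]. unfold Rdiv. rewrite Rmult_assoc, Rinv_l by lra. nra. }
    pose proof (ln_ge0 _ H1). unfold m1. nra. }
  destruct (Rle_or_lt 0 (m1 t)) as [H|H]; [unfold m1 in H; lra|].
  exfalso. pose proof (sh_pos t Ht).
  set (s := Rmin (t/2) (- m1 t / (2 * sinh t))).
  assert (0 < s) by (unfold s; apply Rmin_glb_lt; [lra| apply Rdiv_lt_0_compat; lra]).
  assert (s <= t/2) by (unfold s; apply Rmin_l).
  assert (s <= - m1 t / (2 * sinh t)) by (unfold s; apply Rmin_r).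
  assert (s * sinh t <= - m1 t / 2).
  { apply Rmult_le_compat_r with (r := sinh t) in H3; [|lra].
    replace (- m1 t / (2 * sinh t) * sinh t) with (- m1 t / 2) in H3 by (field; lra). lra. }
  pose proof (Hm s ltac:(lra)). pose proof (Hl s ltac:(lra)). lra.
Qed.


Lemma E t : 0 <= t -> t * (sinh t / cosh t) <= 2 * ln (cosh t).
Proof.
  intros Ht.
  cut (2 * ln (cosh 0) - 0 * (sinh 0 / cosh 0) <= 2 * ln (cosh t) - t * (sinh t / cosh t));
    [rewrite cosh_0, ln_1; lra|].
  apply (mono (fun w => 2 * ln (cosh w) - w * (sinh w / cosh w))
              (fun w => (sinh w * cosh w - w) / cosh w ^ 2) 0 t Ht).
  - intros w _. pose proof (ch_pos w). pose proof (exp_pos w).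
    unfold sinh, cosh in *. auto_derive.
    + repeat split; lra.
    + rewrite !exp_Ropp in *. field. repeat split; nra.
  - intros w Hw. pose proof (ch_pos w). pose proof (ch_ge1 w). pose proof (F0 w ltac:(lra)).
    apply Rle_mult_inv_pos; nra.
Qed.

Lemma ch_mono a b : 0 <= a <= b -> cosh a <= cosh b.
Proof.
  intros H. apply (mono cosh sinh a b); [lra| |].
  - intros; apply d_ch.
  - intros x Hx. pose proof (F0 x). lra.
Qed.

Lemma D q t : 1 <= q -> 0 <= t -> sinh (q*t) / cosh (q*t) <= q * (sinh t / cosh t).
Proof.
  intros Hq Ht.
  cut (q * (sinh 0 / cosh 0) - sinh (q*0) / cosh (q*0) <= q * (sinh t / cosh t) - sinh (q*t) / cosh (q*t));
    [rewrite Rmult_0_r, sinh_0; unfold Rdiv; rewrite Rmult_0_l; lra|].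
  apply (mono (fun w => q * (sinh w / cosh w) - sinh (q*w) / cosh (q*w))
              (fun w => q / cosh w ^ 2 - q / cosh (q*w) ^ 2) 0 t Ht).
  - intros w _. pose proof (ch_pos w). pose proof (exp_pos w).
    pose proof (ch_pos (q*w)). pose proof (exp_pos (q*w)).
    unfold sinh, cosh in *. auto_derive.
    + repeat split; lra.
    + rewrite !exp_Ropp in *. field. repeat split; nra.
  - intros w Hw. pose proof (ch_pos w). pose proof (ch_mono w (q*w) ltac:(nra)).
    assert (cosh w ^ 2 <= cosh (q*w) ^2) by nra.
    assert (/ cosh (q*w) ^2 <= / cosh w ^ 2) by (apply Rinv_le_contravar; nra).
    unfold Rdiv. nra.
Qed.


Lemma d_main t r a b : 0 < t -> 0 < r ->
  is_derive (fun r => ln (sinh (r*t)) - ln r - (a * r^2 + b * r)) r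
     (t * k (r*t) - (2 * a * r + b)).
Proof.
  intros Ht Hr. assert (0 < r * t) by nra. pose proof (sh_pos _ H).
  pose proof (exp_pos (r*t)). pose proof (exp_gt1 _ H).
  unfold k. unfold sinh, cosh in *. auto_derive.
  - repeat split; lra.
  - rewrite !exp_Ropp in *. field. repeat split; nra.
Qed.

Lemma ratio_exp q t : 0 < q -> 0 < t ->
  sinh (q*t) / (q * sinh t) = exp (ln (sinh (q*t)) - ln q - ln (sinh t)).
Proof.
  intros Hq Ht. pose proof (sh_pos t Ht). pose proof (sh_pos (q*t) ltac:(nra)).
  unfold Rminus. rewrite !exp_plus, !exp_Ropp, !exp_ln by lra. field. lra.
Qed.

Lemma core_i q t : 0 < t -> 1/2 <= q <= 1 ->
  exp (2 * q * (q - 1) * ln (cosh t)) <= sinh (q*t) / (q * sinh t).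
Proof.
  intros Ht Hq. set (c := t * cosh t / sinh t - 1).
  assert (Hm : ln (sinh (1*t)) - ln 1 - (0 * 1^2 + c * 1) <= ln (sinh (q*t)) - ln q - (0 * q^2 + c * q)).
  { cut (- (ln (sinh (q*t)) - ln q - (0 * q^2 + c * q)) <= - (ln (sinh (1*t)) - ln 1 - (0 * 1^2 + c * 1))); [lra|].
    apply (mono (fun r => - (ln (sinh (r*t)) - ln r - (0 * r^2 + c * r)))
                (fun r => - (t * k (r*t) - (2 * 0 * r + c))) q 1); [lra| |].
    - intros x Hx. apply (is_derive_opp (fun r => ln (sinh (r*t)) - ln r - (0 * r^2 + c * r))).
      apply d_main; lra.
    - intros x Hx. assert (k (x*t) <= k t) by (apply kmon; nra).
      replace c with (t * k t) by (unfold c, k; pose proof (sh_pos t Ht); field; repeat split; lra).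
      nra. }
  rewrite Rmult_1_l, ln_1 in Hm.
  rewrite ratio_exp by lra. apply exp_le.
  pose proof (B t Ht). fold c in H. pose proof (ln_ge0 _ (ch_ge1 t)).
  assert (0 <= (1 - q) * (2 * q * ln (cosh t) - c)) by (apply Rmult_le_pos; nra).
  nra.
Qed.

Lemma core_ii q t : 0 < t -> 1 <= q ->
  sinh (q*t) / (q * sinh t) <= exp (2 * q * (q - 1) * ln (cosh t)).
Proof.
  intros Ht Hq. set (L := ln (cosh t)).
  pose proof (ln_ge0 _ (ch_ge1 t)) as HL. fold L in HL.
  assert (Hm : ln (sinh (q*t)) - ln q - (2*L * q^2 + (-2*L) * q) <= ln (sinh (1*t)) - ln 1 - (2*L * 1^2 + (-2*L) * 1)).
  { cut (- (ln (sinh (1*t)) - ln 1 - (2*L * 1^2 + (-2*L) * 1)) <= - (ln (sinh (q*t)) - ln q - (2*L * q^2 + (-2*L) * q))); [lra|].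
    apply (mono (fun r => - (ln (sinh (r*t)) - ln r - (2*L * r^2 + (-2*L) * r)))
                (fun r => - (t * k (r*t) - (2 * (2*L) * r + (-2*L)))) 1 q); [lra| |].
    - intros x Hx. apply (is_derive_opp (fun r => ln (sinh (r*t)) - ln r - (2*L * r^2 + (-2*L) * r))).
      apply d_main; lra.
    - intros x Hx. assert (k (x*t) <= sinh (x*t) / cosh (x*t)) by (apply k_le_tanh; nra).
      pose proof (D x t ltac:(lra) ltac:(lra)).
      pose proof (E t ltac:(lra)). fold L in H1.
      assert (t * k (x*t) <= t * (x * (sinh t / cosh t))) by (apply Rmult_le_compat_l; lra).
      nra. }
  rewrite Rmult_1_l, ln_1 in Hm.
  rewrite ratio_exp by lra. apply exp_le. nra.
Qed.

Lemma core_small r t : 0 < t -> 0 < r <= 1 -> sinh (r*t) / (r * sinh t) <= 1.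
Proof.
  intros Ht Hr.
  assert (Hm : ln (sinh (r*t)) - ln r - (0 * r^2 + 0 * r) <= ln (sinh (1*t)) - ln 1 - (0 * 1^2 + 0 * 1)).
  { apply (mono (fun r => ln (sinh (r*t)) - ln r - (0 * r^2 + 0 * r))
                (fun r => t * k (r*t) - (2 * 0 * r + 0)) r 1); [lra| |].
    - intros x Hx. apply d_main; lra.
    - intros x Hx. pose proof (k_nonneg (x*t) ltac:(nra)). nra. }
  rewrite Rmult_1_l, ln_1 in Hm.
  rewrite ratio_exp by lra. rewrite <- exp_0. apply exp_le. lra.
Qed.


Lemma R_even q t : sinh (q * (-t)) / (q * sinh (-t)) = sinh (q*t) / (q * sinh t).
Proof.
  replace (q * -t) with (- (q*t)) by ring. rewrite !sh_neg.
  destruct (Req_dec q 0) as [->|Hq].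
  - rewrite !Rmult_0_l. unfold Rdiv. rewrite Rinv_0. ring.
  - destruct (Req_dec (sinh t) 0) as [H|H].
    + rewrite H. replace (q * - 0) with 0 by ring. unfold Rdiv. rewrite !Rmult_0_r, Rinv_0. ring.
    + field. auto.
Qed.

Lemma core_i_all q t : t <> 0 -> 1/2 <= q <= 1 ->
  exp (2 * q * (q - 1) * ln (cosh t)) <= sinh (q*t) / (q * sinh t).
Proof.
  intros Ht Hq. destruct (Rlt_or_le 0 t) as [H|H].
  - apply core_i; auto.
  - rewrite <- R_even, <- (ch_neg t). apply core_i; lra.
Qed.

Lemma core_ii_all q t : t <> 0 -> (1 <= q \/ q < 0) ->
  sinh (q*t) / (q * sinh t) <= exp (2 * q * (q - 1) * ln (cosh t)).
Proof.
  intros Ht Hq.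
  assert (Hp : forall s, 0 < s -> sinh (q*s) / (q * sinh s) <= exp (2 * q * (q - 1) * ln (cosh s))).
  { clear Ht t. intros t Ht. pose proof (ln_ge0 _ (ch_ge1 t)) as HL.
    destruct Hq as [Hq|Hq]; [apply core_ii; auto|].
    set (r := - q).
    replace (sinh (q*t) / (q * sinh t)) with (sinh (r*t) / (r * sinh t)).
    2:{ unfold r. replace (-q * t) with (- (q*t)) by ring. rewrite sh_neg.
        pose proof (sh_pos t Ht). field. lra. }
    destruct (Rle_or_lt 1 r) as [Hr|Hr].
    - eapply Rle_trans; [apply core_ii; auto|]. apply exp_le. unfold r. assert (0 <= -q * ln (cosh t)) by (apply Rmult_le_pos; lra). nra.
    - eapply Rle_trans; [apply core_small; [auto| unfold r in *; lra]|]. apply Rle_trans with (exp 0); [rewrite exp_0; lra|]. apply exp_le. assert (0 <= q * (q-1)) by nra. assert (0 <= q*(q-1) * ln (cosh t)) by (apply Rmult_le_pos; lra). nra. }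
  destruct (Rlt_or_le 0 t) as [H|H].
  - apply Hp; auto.
  - rewrite <- R_even, <- (ch_neg t). apply Hp; lra.
Qed.

Lemma sh_ratio t : t <> 0 -> 1 <= sinh t / t.
Proof.
  intros Ht. destruct (Rlt_or_le 0 t) as [H|H].
  - pose proof (F0 t). apply Rmult_le_reg_r with t; auto. unfold Rdiv. rewrite Rmult_assoc, Rinv_l; lra.
  - pose proof (F0 (-t)). rewrite sh_neg in H0.
    replace (sinh t / t) with ((- sinh t) / (-t)) by (field; auto).
    assert (0 < -t) by lra.
    apply Rmult_le_reg_r with (-t); auto. unfold Rdiv. rewrite Rmult_assoc, Rinv_l; lra.
Qed.

Lemma exp_m1 u : u <> 0 -> 0 < u * (exp u - 1).
Proof.
  intros Hu. destruct (Rlt_or_le 0 u) as [H|H].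
  - pose proof (exp_gt1 u H). nra.
  - assert (exp u < 1) by (rewrite <- exp_0; apply exp_increasing; lra). nra.
Qed.


Theorem theorem3p3 (x p : R) (hx : 0 < x) :
  (0 <= p <= 1 / 2 ->
     Ghat p x >= Rpower (Kfun x) (- (p * (1 - p))) * WYD p x) /\
  (p <= 0 \/ p >= 1 ->
     Ghat p x <= Rpower (Kfun x) (- (p * (1 - p))) * WYD p x).
Proof.
  destruct (Req_dec x 1) as [Hx1|Hx1].
  { subst x. unfold Ghat, WYD, Kfun, Rpower.
    destruct (Req_EM_T 1 1) as [_|C]; [|contradiction].
    replace ((1+1)^2/(4*1)) with 1 by field. rewrite ln_1, Rmult_0_r, exp_0.
    split; intros; lra. }
  set (t := ln x / 2).
  assert (Hl : ln x = 2 * t) by (unfold t; field).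
  assert (Ht : t <> 0).
  { intro H. apply (ln_neq_0 x Hx1 hx). rewrite Hl, H. ring. }
  assert (Hxe : x = exp t * exp t).
  { rewrite <- exp_plus. replace (t + t) with (ln x) by lra. rewrite exp_ln; auto. }
  pose proof (exp_pos t) as HA.
  assert (HK : forall y, Rpower (Kfun x) y = exp (y * (2 * ln (cosh t)))).
  { intro y. unfold Rpower. f_equal. f_equal.
    assert (Kfun x = cosh t * cosh t).
    { unfold Kfun, cosh. rewrite Hxe, exp_Ropp. field. lra. }
    rewrite H, ln_mult by apply ch_pos. ring. }
  destruct (Req_dec p 0) as [Hp0|Hp0].
  { subst p. unfold Ghat, WYD.
    destruct (Req_EM_T x 1) as [C|_]; [contradiction|].
    destruct (Req_EM_T 0 0) as [_|C]; [|contradiction].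
    rewrite HK. replace (- (0 * (1 - 0)) * (2 * ln (cosh t))) with 0 by ring.
    rewrite exp_0. split; intros; lra. }
  destruct (Req_dec p 1) as [Hp1|Hp1].
  { subst p. split; [intros; lra|]. intros _. unfold Ghat, WYD.
    destruct (Req_EM_T x 1) as [C|_]; [contradiction|].
    destruct (Req_EM_T 1 0) as [C|_]; [lra|].
    destruct (Req_EM_T 1 1) as [_|C]; [|contradiction].
    rewrite HK. replace (- (1 * (1 - 1)) * (2 * ln (cosh t))) with 0 by ring.
    rewrite exp_0, Rmult_1_l. unfold Rpower. rewrite Hl.
    replace (1 / 2 * (2 * t)) with t by field. replace (1 * (2 * t)) with (t + t) by ring.
    rewrite exp_plus. rewrite Hxe.
    pose proof (sh_ratio t Ht).
    assert (exp t <> 1) by (intro C; apply Ht; rewrite <- (ln_exp t), C, ln_1; auto).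
    assert (E1 : exp t * (exp t * exp t - 1) / (exp t * exp t - 1) = exp t).
    { field. intro C. assert ((exp t - 1) * (exp t + 1) = 0) by lra.
      apply Rmult_integral in H1. lra. }
    assert (E2 : (exp t * exp t - 1) / (2 * t) = exp t * (sinh t / t)).
    { unfold sinh. rewrite exp_Ropp. field. lra. }
    rewrite E1, E2. nra. }
  set (q := 1 - p).
  assert (Hq0 : q <> 0) by (unfold q; lra).
  set (A := exp t). set (B := exp (q * t)).
  pose proof (exp_pos (q*t)) as HB. fold B in HB. fold A in HA.
  assert (HW : 0 < p * (1 - p) * (x - 1) ^ 2 /
                  ((Rpower x p - 1) * (Rpower x (1 - p) - 1))).
  { unfold Rpower. set (u1 := p * ln x). set (u2 := (1 - p) * ln x).
    assert (Hu1 : u1 <> 0) by (unfold u1; rewrite Hl; intro C; apply Rmult_integral in C; destruct C; [lra|]; apply Rmult_integral in H; lra).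
    assert (Hu2 : u2 <> 0) by (unfold u2; rewrite Hl; intro C; apply Rmult_integral in C; destruct C; [lra|]; apply Rmult_integral in H; lra).
    pose proof (exp_m1 u1 Hu1). pose proof (exp_m1 u2 Hu2).
    assert (D1 : exp u1 - 1 <> 0) by (intro C; rewrite C in H; lra).
    assert (D2 : exp u2 - 1 <> 0) by (intro C; rewrite C in H0; lra).
    assert (Hlx : ln x <> 0) by (rewrite Hl; lra).
    assert (P : 0 < p * (1 - p) * ((exp u1 - 1) * (exp u2 - 1))).
    { replace (p * (1 - p) * ((exp u1 - 1) * (exp u2 - 1))) with
        ((u1 * (exp u1 - 1)) * (u2 * (exp u2 - 1)) / (ln x * ln x)) by (unfold u1, u2; field; auto).
      apply Rdiv_lt_0_compat; [nra|]. nra. }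
    replace (p * (1 - p) * (x - 1) ^ 2 / ((exp u1 - 1) * (exp u2 - 1))) with
      ((x - 1) ^ 2 * (p * (1 - p) * ((exp u1 - 1) * (exp u2 - 1))) / ((exp u1 - 1) * (exp u2 - 1)) ^ 2)
      by (field; auto).
    apply Rdiv_lt_0_compat; [|apply pow2_gt_0; apply Rmult_integral_contrapositive; auto].
    apply Rmult_lt_0_compat; auto. apply pow2_gt_0. lra. }
  assert (HA1 : A <> 1) by (unfold A; intro C; apply Ht; rewrite <- (ln_exp t), C, ln_1; auto).
  assert (HB1 : B <> 1).
  { unfold B; intro C. assert (q * t = 0) by (apply (f_equal ln) in C; rewrite ln_exp, ln_1 in C; exact C).
    apply Rmult_integral in H. lra. }
  assert (HAB : A <> B).
  { unfold A, B; intro C. assert (t = q * t) by (apply (f_equal ln) in C; rewrite !ln_exp in C; exact C).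
    assert (p * t = 0) by (unfold q in H; lra). apply Rmult_integral in H0. lra. }
  assert (Hid : Ghat p x = sinh (q * t) / (q * sinh t) * WYD p x).
  { unfold Ghat, WYD.
    destruct (Req_EM_T x 1) as [C|_]; [contradiction|].
    destruct (Req_EM_T p 0) as [C|_]; [contradiction|].
    destruct (Req_EM_T p 1) as [C|_]; [contradiction|].
    unfold Rpower. rewrite Hl.
    assert (E1 : exp (p / 2 * (2 * t)) = A / B).
    { unfold A, B. replace (p / 2 * (2 * t)) with (t + - (q * t)) by (unfold q; field).
      rewrite exp_plus, exp_Ropp. pose proof (exp_pos (q*t)). field. lra. }
    assert (E2 : exp (p * (2 * t)) = A * A / (B * B)).
    { unfold A, B. replace (p * (2 * t)) with ((t + - (q * t)) + (t + - (q * t))) by (unfold q; field).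
      rewrite !exp_plus, !exp_Ropp. pose proof (exp_pos (q*t)). field. lra. }
    assert (E3 : exp ((1 - p) * (2 * t)) = B * B).
    { unfold B. rewrite <- exp_plus. f_equal. unfold q. ring. }
    rewrite E1, E2, E3, Hxe. fold A.
    unfold sinh. fold A B. rewrite !exp_Ropp. fold A B.
    replace p with (1 - q) by (unfold q; ring). clearbody A B q t. field.
    repeat split; try lra; intro C;
    first [ assert (Z : (B-1)*(B+1)=0) by lra | assert (Z : (A-B)*(A+B)=0) by lra | assert (Z : (A-1)*(A+1)=0) by lra ];
    apply Rmult_integral in Z; destruct Z; lra. }
  assert (HWp : 0 < WYD p x).
  { unfold WYD. destruct (Req_EM_T x 1) as [C|_]; [contradiction|].
    destruct (Req_EM_T p 0) as [C|_]; [contradiction|].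
    destruct (Req_EM_T p 1) as [C|_]; [contradiction|]. exact HW. }
  assert (HE : Rpower (Kfun x) (- (p * q)) = exp (2 * q * (q - 1) * ln (cosh t))).
  { rewrite HK. f_equal. unfold q. ring. }
  rewrite HE, Hid. split.
  - intros Hp. apply Rle_ge. apply Rmult_le_compat_r; [lra|].
    apply core_i_all; auto. unfold q. lra.
  - intros Hp. apply Rmult_le_compat_r; [lra|].
    apply core_ii_all; auto. unfold q. lra.
Qed.
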